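(* Let $\kappa$ be a cardinal and let $F_\kappa$ be the free group on $\kappa$ generators. Then for every uncountable ordinal $\lambda$ there is a partition $F_\kappa=A_0\cup A_1$ into two cells such that there is no injective sequence $\vec{x}=\langle x_\xi : \xi<\lambda\rangle$ of elements of $F_\kappa$ and no $i\in 2$ with $\mathrm{FP}(\vec{x})\subseteq A_i$; that is, $\mathrm{Hind}(F_\kappa,\lambda)$ fails.
   Context: For a semigroup $(S,* )$, an ordinal $\alpha$ and a sequence $\vec{x}=\langle x_\xi : \xi<\alpha\rangle$ in $S$, $\mathrm{FP}(\vec{x})$ is the set of all finite products $x_{\xi_0}*x_{\xi_1}*\cdots*x_{\xi_l}$ with $l<\omega$ and $\xi_0<\xi_1<\cdots<\xi_l<\alpha$. $\mathrm{Hind}(S,\alpha)$ is the statement: for every partition $S=A_0\cup A_1$ into two cells there exist an (injective) sequence $\vec{x}=\langle x_\xi:\xi<\alpha\rangle$ in $S$ and an $i\in 2$ with $\mathrm{FP}(\vec{x})\subseteq A_i$. *)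

(* Defs.v *)
(* Free group on a type X of generators, realised as reduced words. *)
From Stdlib Require Import List Sorting.Sorted ClassicalEpsilon.
Import ListNotations.
Set Implicit Arguments.

Section FreeGroup.
Variable X : Type.

(* a letter is a generator with an exponent sign: (x, true) = x, (x, false) = x^-1 *)
Definition letter := (X * bool)%type.
Definition linv (a : letter) : letter := (fst a, negb (snd a)).

Fixpoint reduced (w : list letter) : Prop :=
  match w with
  | [] => True
  | a :: w' =>
      match w' with
      | [] => True
      | b :: _ => b <> linv a /\ reduced w'
      end
  end.

Definition letter_dec (a b : letter) : {a = b} + {a <> b} :=
  excluded_middle_informative (a = b).

Definition push (a : letter) (w : list letter) : list letter :=
  match w with
  | [] => [a]
  | b :: w' => if letter_dec b (linv a) then w' else a :: w
  end.

Lemma reduced_tail a w : reduced (a :: w) -> reduced w.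
Proof. destruct w as [|b w]; simpl; tauto. Qed.

Lemma push_reduced a w : reduced w -> reduced (push a w).
Proof.
  destruct w as [|b w']; simpl; auto.
  intro H. destruct (letter_dec b (linv a)) as [E|E].
  - exact (reduced_tail _ _ H).
  - simpl. split; assumption.
Qed.

Lemma fold_push_reduced u v : reduced v -> reduced (fold_right push v u).
Proof. induction u; simpl; auto using push_reduced. Qed.

Definition FreeGroup := { w : list letter | reduced w }.

Definition fg_one : FreeGroup := exist _ [] I.

Definition fg_mul (u v : FreeGroup) : FreeGroup :=
  exist _ (fold_right push (proj1_sig v) (proj1_sig u))
          (fold_push_reduced (proj1_sig u) _ (proj2_sig v)).

End FreeGroup.

(* An ordinal lambda is represented by a type with a strict well-order. *)
Definition strict_well_order (T : Type) (lt : T -> T -> Prop) : Prop :=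
  well_founded lt /\
  (forall a b c, lt a b -> lt b c -> lt a c) /\
  (forall a b, lt a b \/ a = b \/ lt b a).

Definition uncountable (T : Type) : Prop :=
  ~ exists f : T -> nat, forall a b, f a = f b -> a = b.

Definition fin_prod (X T : Type) (x : T -> FreeGroup X) (s : list T) : FreeGroup X :=
  fold_right (fun xi acc => fg_mul (x xi) acc) (fg_one X) s.

Definition in_FP (X T : Type) (lt : T -> T -> Prop) (x : T -> FreeGroup X)
  (g : FreeGroup X) : Prop :=
  exists s : list T, s <> [] /\ StronglySorted lt s /\ g = fin_prod x s.

(* Main.v *)
Require Import Defs.
From Stdlib Require Import List Sorting.Sorted Arith Lia Cantor Classical ClassicalEpsilon ProofIrrelevance.
Import ListNotations.

Set Implicit Arguments.

Section Words.
Variable X : Type.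
Notation letter := (letter X).

Fixpoint lasto (l : list letter) : option letter :=
  match l with [] => None | [a] => Some a | _ :: t => lasto t end.

Definition jok (u v : list letter) : Prop :=
  forall a b, lasto u = Some a -> hd_error v = Some b -> b <> linv a.

Definition inv (K : list letter) := rev (map (@linv X) K).

Lemma linv_inv (a : letter) : linv (linv a) = a.
Proof. destruct a as [x b]; unfold linv; simpl; rewrite Bool.negb_involutive; reflexivity. Qed.

Lemma lasto_cons (a : letter) v : lasto (a :: v) = match lasto v with Some e => Some e | None => Some a end.
Proof.
  revert a; induction v as [|b v IH]; intro a; simpl; auto.
  specialize (IH b). simpl in IH. destruct v; auto. destruct (lasto (l :: v)); [reflexivity|discriminate].
Qed.

Lemma lasto_app (u v : list letter) : lasto (u ++ v) = match lasto v with Some e => Some e | None => lasto u end.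
Proof.
  induction u as [|a u IH].
  - simpl. destruct (lasto v); reflexivity.
  - change ((a::u)++v) with (a :: (u ++ v)). rewrite lasto_cons, IH, lasto_cons. destruct (lasto v); auto.
Qed.

Lemma lasto_none (l : list letter) : lasto l = None -> l = [].
Proof. destruct l; auto. intro E. rewrite lasto_cons in E. destruct (lasto l0); discriminate. Qed.

Lemma lasto_snoc (u : list letter) e : lasto (u ++ [e]) = Some e.
Proof. rewrite lasto_app. reflexivity. Qed.

Lemma lasto_some (l : list letter) e : lasto l = Some e -> exists r, l = r ++ [e].
Proof.
  intro H. destruct l as [|a l']; [discriminate|].
  destruct (exists_last (l:=a::l')) as [r [b Hb]]; [discriminate|].
  rewrite Hb, lasto_snoc in H. injection H as ->. eauto.
Qed.

Lemma hd_app (u v : list letter) : hd_error (u ++ v) = match hd_error u with Some e => Some e | None => hd_error v end.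
Proof. destruct u; reflexivity. Qed.

Lemma reduced_app (u v : list letter) : reduced (u ++ v) <-> reduced u /\ reduced v /\ jok u v.
Proof.
  induction u as [|a u IH].
  - simpl. unfold jok. simpl. intuition discriminate.
  - destruct u as [|c u].
    + simpl. unfold jok; simpl. destruct v as [|b v]; simpl.
      * intuition discriminate.
      * split.
        -- intros [H1 H2]. repeat split; auto. intros a' b' E1 E2; injection E1; injection E2; intros; subst; auto.
        -- intros [_ [H2 H3]]. split; auto.
    + simpl app. change (reduced (a :: c :: (u ++ v))) with (c <> linv a /\ reduced (c :: u ++ v)).
      change (reduced (a :: c :: u)) with (c <> linv a /\ reduced (c :: u)).
      assert (jok (a :: c :: u) v <-> jok (c :: u) v) by (unfold jok; reflexivity).
      simpl app in IH. rewrite IH. tauto.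
Qed.

Lemma fold_push_app (u v : list letter) : reduced (u ++ v) -> fold_right (@push X) v u = u ++ v.
Proof.
  induction u as [|a u IH]; simpl; auto.
  intro H. rewrite IH by (exact (reduced_tail _ _ H)).
  unfold push. destruct (u ++ v) as [|b t] eqn:E; auto.
  destruct (letter_dec b (linv a)); auto. simpl in H. destruct H; contradiction.
Qed.

Lemma inv_snoc (K : list letter) a : inv (K ++ [a]) = linv a :: inv K.
Proof. unfold inv. rewrite map_app, rev_app_distr. reflexivity. Qed.

Lemma inv_cons k (K : list letter) : inv (k :: K) = inv K ++ [linv k].
Proof. reflexivity. Qed.

Lemma cancel_fold (K Z : list letter) : fold_right (@push X) (inv K ++ Z) K = Z.
Proof.
  revert Z; induction K as [|k K IH]; intro Z; simpl; auto.
  rewrite inv_cons, <- app_assoc. simpl. rewrite IH. unfold push.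
  destruct (letter_dec (linv k) (linv k)); congruence.
Qed.

Lemma decomp n : forall u v : list letter, length v = n ->
  exists u' K v', u = u' ++ K /\ v = inv K ++ v' /\ jok u' v'.
Proof.
  induction n as [|n IH]; intros u v Hv.
  - destruct v; [|discriminate]. exists u, [], []. rewrite app_nil_r. repeat split; auto.
    intros a b _ E; discriminate.
  - destruct v as [|b v0]; [discriminate|]. simpl in Hv. injection Hv as Hv.
    destruct u as [|a0 u0'].
    + exists [], [], (b :: v0). repeat split; auto. intros a b' E; discriminate.
    + destruct (exists_last (l:=a0::u0')) as [u0 [a Hu]]; [discriminate|]. rewrite Hu. clear Hu.
      destruct (classic (b = linv a)) as [Eb|Eb].
      * destruct (IH u0 v0 Hv) as [u' [K [v' [H1 [H2 H3]]]]].
        exists u', (K ++ [a]), v'. subst. repeat split; auto.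
        -- rewrite app_assoc. reflexivity.
        -- rewrite inv_snoc. reflexivity.
      * exists (u0 ++ [a]), [], (b :: v0). rewrite app_nil_r. repeat split; auto.
        intros a' b' E1 E2. rewrite lasto_snoc in E1. simpl in E2. congruence.
Qed.

End Words.

Set Implicit Arguments.

Section Count.
Variable T : Type.
Definition countable (P : T -> Prop) : Prop :=
  exists f : T -> nat, forall a b, P a -> P b -> f a = f b -> a = b.

Lemma cnt_mono (P Q : T -> Prop) : (forall a, P a -> Q a) -> countable Q -> countable P.
Proof. intros H [f Hf]. exists f. auto. Qed.

Lemma cnt_union (P Q : T -> Prop) : countable P -> countable Q -> countable (fun a => P a \/ Q a).
Proof.
  intros [f Hf] [g Hg].
  exists (fun a => if excluded_middle_informative (P a) then 2 * f a else S (2 * g a)).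
  intros a b Ha Hb E.
  destruct (excluded_middle_informative (P a)), (excluded_middle_informative (P b)).
  - apply Hf; auto; lia.
  - lia.
  - lia.
  - apply Hg; [destruct Ha|destruct Hb|]; try contradiction; auto; lia.
Qed.

Lemma cnt_sub (P : T -> Prop) : (forall a b, P a -> P b -> a = b) -> countable P.
Proof. intro H. exists (fun _ => 0). auto. Qed.

Lemma cnt_list (l : list T) (Q : T -> T -> Prop) :
  (forall a, In a l -> countable (Q a)) -> countable (fun y => exists a, In a l /\ Q a y).
Proof.
  induction l as [|a l IH]; intro H.
  - apply cnt_sub. intros x y [b [[] _]].
  - eapply cnt_mono; [|apply cnt_union; [apply (H a); left; auto| apply IH; intros; apply H; right; auto]].
    intros y [b [[<-|Hb] Hq]]; [left; auto | right; eauto].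
Qed.

Lemma cnt_in (l : list T) : countable (fun y => In y l).
Proof.
  eapply cnt_mono; [|apply (cnt_list l (fun a y => a = y))].
  - intros y Hy. exists y; auto.
  - intros. apply cnt_sub. intros; subst; auto.
Qed.

Lemma cnt_nat (P : T -> Prop) (h : T -> nat) :
  (forall n, countable (fun a => P a /\ h a = n)) -> countable P.
Proof.
  intro H.
  destruct (constructive_indefinite_description _ (choice _ H)) as [g Hg]. 
  exists (fun a => Cantor.to_nat (h a, g (h a) a)).
  intros a b Ha Hb E.
  apply (f_equal Cantor.of_nat) in E. rewrite !Cantor.cancel_of_to in E.
  injection E as E1 E2. rewrite E1 in E2. apply (Hg (h b)); auto.
Qed.
End Count.

Unset Implicit Arguments.

Section Struct.
Variables (X T : Type) (x : T -> FreeGroup X).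
Hypothesis xinj : forall a b, x a = x b -> a = b.
Let w (a : T) := proj1_sig (x a).

Lemma w_inj a b : w a = w b -> a = b.
Proof.
  unfold w. intro E. apply xinj. destruct (x a) as [u pu], (x b) as [v pv]. simpl in E. subst.
  f_equal. apply proof_irrelevance.
Qed.

Lemma structure d : forall (S : T -> Prop) (A B : list (letter X)), ~ countable S ->
  (forall a, S a -> exists r, w a = A ++ r ++ B /\ length r = d) ->
  exists S' A' B' d', ~ countable S' /\ 1 <= d' /\
    (forall a, S' a -> exists r, w a = A' ++ r ++ B' /\ length r = d') /\
    (forall e, countable (fun a => S' a /\ exists r, w a = A' ++ e :: r ++ B')) /\
    (forall e, countable (fun a => S' a /\ exists r, w a = A' ++ r ++ e :: B')).
Proof.
  induction d as [|d IH]; intros S A B HS HA.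
  - exfalso. apply HS. apply cnt_sub. intros a b Ha Hb.
    destruct (HA a Ha) as [r [E1 L1]], (HA b Hb) as [r' [E2 L2]].
    destruct r; [|discriminate]. destruct r'; [|discriminate]. apply w_inj. congruence.
  - destruct (classic (forall e, countable (fun a => S a /\ exists r, w a = A ++ e :: r ++ B))) as [H1|H1].
    + destruct (classic (forall e, countable (fun a => S a /\ exists r, w a = A ++ r ++ e :: B))) as [H2|H2].
      * exists S, A, B, (Datatypes.S d). repeat split; auto. lia.
      * apply not_all_ex_not in H2. destruct H2 as [e He].
        apply (IH _ A (e :: B) He). intros a [Sa [r Er]].
        destruct (HA a Sa) as [r0 [E0 L0]]. exists r. split; auto.
        rewrite Er in E0. apply app_inv_head in E0.
        replace (r ++ e :: B) with ((r ++ [e]) ++ B) in E0 by (rewrite <- app_assoc; reflexivity).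
        apply app_inv_tail in E0. subst r0. rewrite length_app in L0. simpl in L0. lia.
    + apply not_all_ex_not in H1. destruct H1 as [e He].
      apply (IH _ (A ++ [e]) B He). intros a [Sa [r Er]].
      destruct (HA a Sa) as [r0 [E0 L0]]. exists r. split.
      * rewrite Er, <- app_assoc. reflexivity.
      * rewrite Er in E0. apply app_inv_head in E0.
        replace (e :: r ++ B) with ((e :: r) ++ B) in E0 by reflexivity.
        apply app_inv_tail in E0. subst r0. simpl in L0. lia.
Qed.
End Struct.

Unset Implicit Arguments.

Section Insert.
Variables (T : Type) (lt : T -> T -> Prop).
Hypothesis trans : forall a b c, lt a b -> lt b c -> lt a c.
Hypothesis tot : forall a b, lt a b \/ a = b \/ lt b a.

Lemma insert_sorted (l : list T) y : StronglySorted lt l -> ~ In y l ->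
  exists l', StronglySorted lt l' /\ length l' = S (length l) /\ (forall z, In z l' <-> z = y \/ In z l).
Proof.
  induction l as [|a l IH]; intros Hs Hy.
  - exists [y]. split; [constructor; constructor|]. split; [reflexivity|].
    intro z; simpl; split; intros [H|H]; auto; contradiction.
  - apply StronglySorted_inv in Hs as [Hs Hf].
    destruct (tot y a) as [H|[H|H]].
    + exists (y :: a :: l). split; [|split; [reflexivity|]].
      * constructor; [constructor; auto|]. constructor; auto.
        rewrite Forall_forall in *. intros z Hz; eauto.
      * intro z; simpl; split; intro Hz; intuition (subst; auto).
    + exfalso; apply Hy; left; auto.
    + destruct (IH Hs) as [l' [H1 [H2 H3]]]. { intro; apply Hy; right; auto. }
      exists (a :: l'). split; [|split; [simpl; lia|]].
      * constructor; auto. rewrite Forall_forall in *. intros z Hz.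
        apply H3 in Hz as [->|Hz]; auto.
      * intro z; simpl; rewrite H3; intuition (subst; auto).
Qed.
End Insert.

Set Implicit Arguments.

Section Uniform.
Variables (X T : Type) (lt : T -> T -> Prop) (x : T -> FreeGroup X).
Let w (a : T) := proj1_sig (x a).
Variables (P : T -> Prop) (A B A' B' K : list (letter X)) (d : nat).
Hypothesis HP : ~ countable P.
Hypothesis Hd : 1 <= d.
Hypothesis Hw : forall a, P a -> exists r, w a = A ++ r ++ B /\ length r = d.
Hypothesis fH : forall e, countable (fun a => P a /\ exists r, w a = A ++ e :: r ++ B).
Hypothesis fL : forall e, countable (fun a => P a /\ exists r, w a = A ++ r ++ e :: B).
Hypothesis HB : B = B' ++ K.
Hypothesis HA : A = inv K ++ A'.
Hypothesis Hj : jok B' A'.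

Definition mid a := firstn d (skipn (length A) (w a)).

Lemma mid_eq a : P a -> w a = A ++ mid a ++ B /\ length (mid a) = d.
Proof.
  intro Pa. destruct (Hw Pa) as [r [E L]]. unfold mid. rewrite E.
  rewrite skipn_app, skipn_all, Nat.sub_diag. simpl.
  rewrite firstn_app, <- L, firstn_all, Nat.sub_diag. simpl. rewrite app_nil_r. auto.
Qed.

Lemma mid_ne a : P a -> mid a <> [].
Proof. intros Pa E. destruct (mid_eq Pa) as [_ L]. rewrite E in L. simpl in L. lia. Qed.

Lemma fH' e : countable (fun a => P a /\ hd_error (mid a) = Some e).
Proof.
  eapply cnt_mono; [|apply (fH e)]. intros a [Pa Ha]. split; auto.
  destruct (mid a) as [|b r] eqn:M; [discriminate|]. simpl in Ha. injection Ha as ->.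
  exists r. destruct (mid_eq Pa) as [E _]. rewrite E, M. reflexivity.
Qed.

Lemma fL' e : countable (fun a => P a /\ lasto (mid a) = Some e).
Proof.
  eapply cnt_mono; [|apply (fL e)]. intros a [Pa Ha]. split; auto.
  destruct (lasto_some _ Ha) as [r M].
  exists r. destruct (mid_eq Pa) as [E _]. rewrite E, M, <- app_assoc. reflexivity.
Qed.

Definition cond a b := forall e, lasto (mid a) = Some e -> hd_error (mid b) <> Some (linv e).
Definition fixd a := (forall e, lasto B' = Some e -> hd_error (mid a) <> Some (linv e)) /\
                     (forall e, hd_error A' = Some e -> lasto (mid a) <> Some (linv e)).

Fixpoint R (l : list T) : list (letter X) :=
  match l with
  | [] => []
  | y :: r => mid y ++ match r with [] => B | _ :: _ => B' ++ A' ++ R r end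
  end.

Lemma hd_R z r : P z -> exists b, hd_error (R (z :: r)) = Some b /\ hd_error (mid z) = Some b.
Proof.
  intro Pz. simpl. rewrite hd_app. destruct (mid z) as [|b m] eqn:M.
  - exfalso; exact (mid_ne Pz M).
  - exists b; auto.
Qed.

Lemma prod_eq l : l <> [] -> NoDup l -> (forall a, In a l -> P a /\ fixd a) ->
  (forall a b, In a l -> In b l -> a <> b -> cond a b) ->
  proj1_sig (fin_prod x l) = A ++ R l.
Proof.
  induction l as [|y r IH]; intros Hne Hnd Hf Hc; [congruence|].
  assert (Py : P y) by (apply Hf; left; auto).
  destruct (mid_eq Py) as [Ey _].
  change (proj1_sig (fin_prod x (y :: r))) with (fold_right (@push X) (proj1_sig (fin_prod x r)) (w y)).
  destruct r as [|z r'].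
  - simpl proj1_sig. rewrite fold_push_app.
    + rewrite app_nil_r, Ey. reflexivity.
    + rewrite app_nil_r. exact (proj2_sig (x y)).
  - inversion Hnd as [|? ? Hyn Hnd']. subst.
    rewrite IH; auto; [|discriminate| intros; apply Hf; right; auto | intros; apply Hc; auto; right; auto].
    assert (Ey' : w y = (A ++ mid y ++ B') ++ K) by (rewrite Ey, HB, !app_assoc; reflexivity).
    rewrite Ey', fold_right_app.
    assert (C : fold_right (@push X) (A ++ R (z :: r')) K = A' ++ R (z :: r'))
      by (rewrite HA, <- app_assoc; apply cancel_fold).
    rewrite C.
    assert (Red : reduced ((A ++ mid y ++ B') ++ A' ++ R (z :: r'))).
    { apply reduced_app. split; [|split].
      - assert (Rw := proj2_sig (x y)). fold (w y) in Rw. rewrite Ey' in Rw.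
        apply reduced_app in Rw. tauto.
      - assert (Rz := proj2_sig (fin_prod x (z :: r'))).
        rewrite IH in Rz; auto; [|discriminate| intros; apply Hf; right; auto | intros; apply Hc; auto; right; auto].
        rewrite HA, <- app_assoc in Rz. apply reduced_app in Rz. tauto.
      - assert (Pz : P z) by (apply Hf; right; left; auto).
        destruct (hd_R r' Pz) as [bz [Hz1 Hz2]].
        destruct (Hf y (or_introl eq_refl)) as [_ [Fy1 Fy2]].
        destruct (Hf z (or_intror (or_introl eq_refl))) as [_ [Fz1 Fz2]].
        assert (Cyz : cond y z) by (apply Hc; [left|right;left|]; auto; intro E; subst; apply Hyn; left; auto).
        intros a b La Hb. rewrite !lasto_app in La. rewrite hd_app in Hb.
        destruct (lasto B') as [a'|] eqn:LB.
        + injection La as ->. destruct (hd_error A') as [b'|] eqn:HA'.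
          * injection Hb as ->. eapply Hj; eauto.
          * rewrite Hz1 in Hb. injection Hb as ->. intro E. apply (Fz1 a); auto. congruence.
        + destruct (lasto (mid y)) as [a'|] eqn:LM; [|exfalso; apply (mid_ne Py); apply lasto_none; auto].
          injection La as ->. destruct (hd_error A') as [b'|] eqn:HA'.
          * injection Hb as ->. intro E. apply (Fy2 b); auto. rewrite E, linv_inv. reflexivity.
          * rewrite Hz1 in Hb. injection Hb as ->. intro E. apply (Cyz a); auto. congruence. }
    rewrite fold_push_app by exact Red.
    simpl R. rewrite !app_assoc. reflexivity.
Qed.

Lemma R_len l : l <> [] -> (forall a, In a l -> P a) ->
  length (R l) + (length B' + length A') = length B + (d + (length B' + length A')) * length l.
Proof.
  induction l as [|y r IH]; intros Hne Hl; [congruence|].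
  assert (Py : P y) by (apply Hl; left; auto). destruct (mid_eq Py) as [_ Ly].
  simpl R. rewrite length_app, Ly. destruct r as [|z r'].
  - simpl. lia.
  - rewrite !length_app.
    assert (IH' := IH ltac:(discriminate) ltac:(intros; apply Hl; right; auto)).
    simpl length in *. lia.
Qed.

Lemma cnt_hd (o : option (letter X)) :
  countable (fun y => P y /\ exists e, o = Some e /\ hd_error (mid y) = Some (linv e)).
Proof.
  destruct o as [e0|].
  - eapply cnt_mono; [|apply (fH' (linv e0))]. intros y [Py [e [E1 E2]]]. injection E1 as ->. auto.
  - apply cnt_sub. intros a b [_ [e [E _]]]. discriminate.
Qed.

Lemma cnt_last (o : option (letter X)) :
  countable (fun y => P y /\ exists e, o = Some e /\ lasto (mid y) = Some (linv e)).
Proof.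
  destruct o as [e0|].
  - eapply cnt_mono; [|apply (fL' (linv e0))]. intros y [Py [e [E1 E2]]]. injection E1 as ->. auto.
  - apply cnt_sub. intros a b [_ [e [E _]]]. discriminate.
Qed.

Definition Good (l : list T) y := ~ In y l /\ fixd y /\ forall a, In a l -> cond a y /\ cond y a.

Lemma exists_good l : exists y, P y /\ Good l y.
Proof.
  apply NNPP. intro Hn. apply HP.
  eapply cnt_mono; [|apply cnt_union; [apply (cnt_in l)|apply cnt_union; [apply (cnt_hd (lasto B'))|
      apply cnt_union; [apply (cnt_last (hd_error A'))| apply cnt_union;
        [apply (cnt_list l (fun a y => P y /\ exists e, lasto (mid a) = Some e /\ hd_error (mid y) = Some (linv e)))
        |apply (cnt_list l (fun a y => P y /\ exists e, hd_error (mid a) = Some e /\ lasto (mid y) = Some (linv e)))]]]]].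
  - intros y Py.
    assert (NG : ~ Good l y) by (intro G; apply Hn; eauto).
    unfold Good, fixd, cond in NG.
    destruct (classic (In y l)) as [Hi|Hi]; [left; auto|right].
    destruct (classic (exists e, lasto B' = Some e /\ hd_error (mid y) = Some (linv e))) as [H2|H2]; [left; auto|right].
    destruct (classic (exists e, hd_error A' = Some e /\ lasto (mid y) = Some (linv e))) as [H3|H3]; [left; auto|right].
    destruct (classic (exists a, In a l /\ exists e, lasto (mid a) = Some e /\ hd_error (mid y) = Some (linv e))) as [H4|H4].
    { left. destruct H4 as [a [Ha He]]. eauto. }
    right. apply NNPP. intro H5. apply NG. split; [auto|split; [split|]].
    + intros e E1 E2. apply H2; eauto.
    + intros e E1 E2. apply H3; eauto.
    + intros a Ha. split.
      * intros e E1 E2. apply H4; eauto.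
      * intros e E1 E2. apply H5. exists a. split; auto. split; auto. exists (linv e). rewrite linv_inv. auto.
  - intros a _. apply cnt_hd.
  - intros a _. apply cnt_last.
Qed.

Hypothesis trans : forall a b c, lt a b -> lt b c -> lt a c.
Hypothesis tot : forall a b, lt a b \/ a = b \/ lt b a.
Hypothesis irr : forall a, ~ lt a a.

Lemma sorted_nodup l : StronglySorted lt l -> NoDup l.
Proof.
  induction l as [|a l IH]; intro H; constructor.
  - apply StronglySorted_inv in H as [_ F]. rewrite Forall_forall in F. intro Ha. exact (irr (F a Ha)).
  - apply IH. apply StronglySorted_inv in H. tauto.
Qed.

Lemma select k : exists l, StronglySorted lt l /\ length l = k /\ (forall a, In a l -> P a /\ fixd a) /\ (forall a b, In a l -> In b l -> a <> b -> cond a b).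
Proof.
  induction k as [|k IH].
  - exists []. repeat split; try constructor; simpl; tauto.
  - destruct IH as [l [Hs [Hl [Hf Hc]]]].
    destruct (exists_good l) as [y [Py [Gy1 [Gy2 Gy3]]]].
    destruct (@insert_sorted T lt trans tot l y Hs Gy1) as [l' [Hs' [Hl' Hi]]].
    exists l'. split; auto. split; [lia|]. split.
    + intros a Ha. apply Hi in Ha as [->|Ha]; auto.
    + intros a b Ha Hb Hab. apply Hi in Ha, Hb.
      destruct Ha as [->|Ha], Hb as [->|Hb]; [congruence| apply Gy3; auto | apply Gy3; auto | auto].
Qed.

Lemma fp_len l : l <> [] -> (forall a, In a l -> P a /\ fixd a) -> (forall a b, In a l -> In b l -> a <> b -> cond a b) ->
  StronglySorted lt l ->
  length (proj1_sig (fin_prod x l)) + (length B' + length A') = length A + length B + (d + (length B' + length A')) * length l.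
Proof.
  intros Hne Hf Hc Hs. rewrite prod_eq; auto using sorted_nodup.
  rewrite length_app. rewrite <- Nat.add_assoc, R_len; auto. - lia. - intros; apply Hf; auto.
Qed.

End Uniform.

Unset Implicit Arguments.

Lemma find_k (E s t : nat) : forall m, E + s < t -> t <= E + s * m ->
  exists k, 1 <= k /\ E + s * k < t /\ t <= E + s * (k + 1).
Proof.
  induction m as [|m IH]; intros H1 H2; [lia|].
  destruct (Nat.lt_ge_cases (E + s * m) t) as [H|H].
  - exists m. destruct m as [|m']; [lia|]. split; [lia|]. split; auto. replace (S m' + 1) with (S (S m')) by lia. auto.
  - apply IH; auto.
Qed.

Lemma inv_len X (K : list (letter X)) : length (inv K) = length K.
Proof. unfold inv. rewrite length_rev, length_map. reflexivity. Qed.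

Definition col {X} (g : FreeGroup X) : bool := Nat.odd (Nat.log2 (length (proj1_sig g))).

Theorem theorem4p1 (X : Type) (T : Type) (lt : T -> T -> Prop) :
  strict_well_order lt -> uncountable T ->
  exists c : FreeGroup X -> bool,
    forall x : T -> FreeGroup X,
      (forall a b, x a = x b -> a = b) ->
      forall i : bool, ~ (forall g, in_FP lt x g -> c g = i).
Proof.
  intros [Hwf [Htr Htot]] Hunc.
  assert (Hirr : forall a, ~ lt a a).
  { intros a H. induction (Hwf a) as [a _ IH]. exact (IH a H H). }
  exists (@col X). intros x xinj i Hi.
  set (w := fun a => proj1_sig (x a)).
  assert (HT : ~ countable (fun _ : T => True)).
  { intros [f Hf]. apply Hunc. exists f. auto. }
  assert (Hn : exists n, ~ countable (fun a => length (w a) = n)).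
  { apply NNPP. intro Hn. apply HT. apply (cnt_nat _ (fun a => length (w a))). intro n.
    eapply cnt_mono; [|apply NNPP; intro Hc; apply Hn; exists n; exact Hc]. intros a [_ Ha]. exact Ha. }
  destruct Hn as [n Hn].
  destruct (@structure X T x xinj n (fun a => length (w a) = n) [] [] Hn) as
      [P [A [B [d [HP [Hd [Hw [fH fL]]]]]]]].
  { intros a Ha. exists (w a). simpl. rewrite app_nil_r. auto. }
  destruct (decomp B A (eq_refl (length A))) as [B' [K [A' [HB [HA Hj]]]]].
  set (c := length B' + length A').
  set (s := d + c).
  assert (Hc : c <= length A + length B).
  { unfold c. rewrite HA, HB, !length_app, inv_len. lia. }
  set (E := length A + length B - c).
  set (J := E + s).
  assert (HJ : J < 2 ^ J) by (apply Nat.pow_gt_lin_r; lia).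
  assert (P2 : 2 ^ S J = 2 * 2 ^ J) by (apply Nat.pow_succ_r'). 
  assert (P3 : 2 ^ S (S J) = 2 * 2 ^ S J) by (apply Nat.pow_succ_r').
  destruct (find_k E s (2 ^ S J) (2 ^ S J)) as [k [Hk1 [Hk2 Hk3]]]; [lia|nia|].
  destruct (select lt x A B A' B' HP Hd Hw fH fL Htr Htot (k + 1)) as [l [Hs [Hl [Hf Hcd]]]].
  destruct l as [|y r]; [simpl in Hl; lia|].
  simpl in Hl.
  assert (Lr : length (proj1_sig (fin_prod x (y :: r))) + c = length A + length B + s * (k + 1)).
  { unfold c, s. rewrite (fp_len P K Hd Hw HB HA Hj Hirr); auto; try discriminate.
    all: try (simpl length; rewrite Hl; lia). }
  apply StronglySorted_inv in Hs as Hs'. destruct Hs' as [Hsr _].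
  assert (Lr' : length (proj1_sig (fin_prod x r)) + c = length A + length B + s * k).
  { assert (Hlr : length r = k) by lia.
    unfold c, s. rewrite (fp_len P K Hd Hw HB HA Hj Hirr); auto.
    all: try (rewrite Hlr; lia).
    - destruct r; simpl in Hl; [lia|discriminate].
    - intros; apply Hf; right; auto.
    - intros; apply Hcd; try right; auto. }
  assert (C1 : col (fin_prod x (y :: r)) = i).
  { apply Hi. exists (y :: r). repeat split; auto; discriminate. }
  assert (C2 : col (fin_prod x r) = i).
  { apply Hi. exists r. repeat split; auto. destruct r; simpl in Hl; [lia|discriminate]. }
  unfold col in C1, C2.
  rewrite (Nat.log2_unique _ (S J)) in C1 by (try split; unfold E in *; lia).
  rewrite (Nat.log2_unique _ J) in C2 by (try split; unfold E in *; lia).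
  rewrite Nat.odd_succ, <- Nat.negb_odd, C2 in C1. destruct i; discriminate.
Qed.
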